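(* Let $\Gamma=(N,A,u)$ be a finite game that admits a correlated equilibrium $p\in\Delta A$ all of whose coordinates are rational numbers. Then there exists a finite set of message profiles $M=\times_{i\in N}M_i$ such that every outcome $\mu\in\Delta A$ with $\mathrm{supp}(\mu)\subseteq\mathrm{supp}(p)$ is implemented by some partially specified data-generating process $\mathcal{D}=(M,\eta,\mathcal{F})$.
   Context: A finite game $\Gamma=(N,A,u)$ has a finite set of players $N$, finite action sets $A_i$, $A=\times_{i\in N}A_i$, and utilities $u_i:A\to\mathbb{R}$ (extended multilinearly to mixed action profiles). A correlated equilibrium is $p\in\Delta A$ such that for all $i$, all $a_i$ with $\sum_{a_{-i}}p_{a_i,a_{-i}}>0$, and all $b\in A_i$: $\sum_{a_{-i}}p_{a_i,a_{-i}}[u_i(a_i,a_{-i})-u_i(b,a_{-i})]\ge 0$. A partially specified data-generating process is a triple $\mathcal{D}=(M,\eta,\mathcal{F})$ with $M=\times_iM_i$ finite, $\eta\in\Delta M$, $\mathcal{F}\subseteq\{f:M\to\mathbb{R}\}$. Let $\Delta_{\mathcal{D}}=\{q\in\Delta M:\sum_mq_mf(m)=\sum_m\eta_mf(m)\ \forall f\in\mathcal{F}\}$; the belief is the unique maximizer $q$ of $\mathcal{H}(q)=-\sum_mq_m\log q_m$ over $\Delta_{\mathcal{D}}$. A strategy profile is $\sigma=(\sigma_i)$, $\sigma_i:M_i\to\Delta A_i$, $\sigma(a\mid m)=\prod_i\sigma_i(a_i\mid m_i)$, and $(\eta\circ\sigma)(a)=\sum_m\eta_m\sigma(a\mid m)$.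 $\mu\in\Delta A$ is implemented by $\mathcal{D}$ if there is $\sigma$ with (i) $q$ the maximum-entropy belief; (ii) for all $i$, all $m_i$ with positive $q$-marginal, all $a_i'\in A_i$: $\sum_{m_{-i}}q_{m_i,m_{-i}}[u_i(\sigma_i(m_i),\sigma_{-i}(m_{-i}))-u_i(a_i',\sigma_{-i}(m_{-i}))]\ge0$; (iii) $\mu=\eta\circ\sigma$. *)

(* Defs.v *)
From HB Require Import structures.
From mathcomp Require Import all_boot all_order all_algebra.
From mathcomp Require Import reals exp.
Set Implicit Arguments. Unset Strict Implicit. Unset Printing Implicit Defensive.
Import Order.TTheory GRing.Theory Num.Theory.
Local Open Scope ring_scope.

Definition profile (N : finType) (A : N -> finType) := {dffun forall i : N, A i}.
Arguments profile : clear implicits.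

Section Defs.
Variable R : realType.

Definition is_dist (X : finType) (f : X -> R) : Prop :=
  (forall x, 0 <= f x) /\ \sum_(x : X) f x = 1.

Variables (N : finType) (A : N -> finType).

Definition upd (a : profile N A) (i : N) (b : A i) : profile N A :=
  finfun (dfwith (fun j => a j) b).
Arguments upd a i b : clear implicits.

Definition correlated_eq (u : N -> profile N A -> R) (p : profile N A -> R) : Prop :=
  is_dist p /\
  forall (i : N) (ai : A i), 0 < \sum_(a : profile N A | a i == ai) p a ->
    forall b : A i,
      0 <= \sum_(a : profile N A | a i == ai) p a * (u i a - u i (upd a i b)).

Definition mixpay (u : N -> profile N A -> R) (i : N) (s : forall j, A j -> R) : R :=
  \sum_(a : profile N A) (\prod_(j : N) s j (a j)) * u i a.

Definition pure (X : finType) (b : X) : X -> R := fun x => (x == b)%:R.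

Variable M : N -> finType.

(* Shannon entropy, with the convention 0 log 0 = 0 (ln 0 = 0 in the library) *)
Definition entropy (q : profile N M -> R) : R :=
  - \sum_(m : profile N M) q m * ln (q m).

Definition DeltaD (eta : profile N M -> R) (F : (profile N M -> R) -> Prop)
  (q : profile N M -> R) : Prop :=
  is_dist q /\ forall f, F f -> \sum_m q m * f m = \sum_m eta m * f m.

Definition maxent_belief (eta : profile N M -> R) (F : (profile N M -> R) -> Prop)
  (q : profile N M -> R) : Prop :=
  DeltaD eta F q /\
  (forall q', DeltaD eta F q' -> entropy q' <= entropy q) /\
  (forall q', DeltaD eta F q' -> entropy q' = entropy q -> q' = q).

Definition is_strategy (sigma : forall j, M j -> A j -> R) : Prop :=
  forall j (mj : M j), is_dist (sigma j mj).

Definition mixed_at (sigma : forall j, M j -> A j -> R) (m : profile N M) :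
  forall j, A j -> R := fun j => sigma j (m j).

Definition implemented (u : N -> profile N A -> R) (eta : profile N M -> R)
  (F : (profile N M -> R) -> Prop) (mu : profile N A -> R) : Prop :=
  exists sigma : forall j, M j -> A j -> R,
    is_strategy sigma /\
    exists q : profile N M -> R,
      maxent_belief eta F q /\
      (forall (i : N) (mi : M i), 0 < \sum_(m : profile N M | m i == mi) q m ->
         forall b : A i,
           0 <= \sum_(m : profile N M | m i == mi)
                  q m * (mixpay u i (mixed_at sigma m)
                         - mixpay u i (dfwith (mixed_at sigma m) (pure b)))) /\
      (forall a : profile N A,
         mu a = \sum_(m : profile N M) eta m * \prod_(j : N) sigma j (m j) (a j)).

End Defs.
Arguments upd {N A} a i b.

(* Main.v *)
Require Import Defs.
From HB Require Import structures.
From mathcomp Require Import all_boot all_order all_algebra.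
From mathcomp Require Import reals exp.
From mathcomp Require Import lra zify ring.
From Stdlib Require FunctionalExtensionality.
Import Order.TTheory GRing.Theory Num.Theory.
Local Open Scope ring_scope.

Section G.
Variable R : realType.

Lemma ln_le_sub1 (x : R) : 0 < x -> ln x <= x - 1.
Proof.
move=> x0; have := expR_ge1Dx (ln x); rewrite lnK ?posrE //; lra.
Qed.

Lemma ln_lt_sub1 (x : R) : 0 < x -> x != 1 -> ln x < x - 1.
Proof.
move=> x0 x1; have : ln x != 0 by rewrite ln_eq0.
move/expR_gt1Dx; rewrite lnK ?posrE //; lra.
Qed.

Lemma gibbs (X : finType) (S : pred X) (q : X -> R) :
  0 < \sum_x ((S x)%:R : R) ->
  (forall x, 0 <= q x) -> \sum_x q x = 1 -> (forall x, ~~ S x -> q x = 0) ->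
  - \sum_x q x * ln (q x) <= ln (\sum_x (S x)%:R : R) /\
  (- \sum_x q x * ln (q x) = ln (\sum_x (S x)%:R) ->
     forall x, q x = (S x)%:R / \sum_x ((S x)%:R : R)).
Proof.
set s := \sum_x _ => s0 q0 q1 qS.
pose t x := q x * (- ln (q x) - ln s).
pose r x := (S x)%:R / s - q x.
have Ht : \sum_x t x = - \sum_x q x * ln (q x) - ln s.
  rewrite /t; under eq_bigr do rewrite mulrDr mulrN.
  by rewrite big_split /= sumrN -big_distrl /= q1 mul1r -sumrN.
have Hr : \sum_x r x = 0.
  rewrite /r big_split /= sumrN q1 -big_distrl /= -/s mulfV ?subrr // gt_eqF //.
have key x : t x <= r x /\ (t x = r x -> q x = (S x)%:R / s).
  have [qx0|qxp] := eqVneq (q x) 0.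
    rewrite /t /r qx0 mul0r subr0; split.
      by apply: divr_ge0; [case: (S x)| exact: ltW].
    move/esym/eqP; rewrite mulf_eq0 invr_eq0 (gt_eqF s0) orbF.
    case: (S x) => //=; last by rewrite mul0r. by rewrite oner_eq0.
  have qp : 0 < q x by rewrite lt_def qxp q0.
  have Sx : S x by apply/negPn/negP => /qS; apply/eqP.
  have yp : 0 < s * q x by apply: mulr_gt0.
  have E : - ln (q x) - ln s = ln ((s * q x)^-1).
    by rewrite lnV ?posrE // lnM ?posrE //; lra.
  rewrite /t /r Sx E.
  have E2 : true%:R / s - q x = q x * ((s * q x)^-1 - 1).
    by rewrite mulrBr mulr1 invfM mulrCA mulfV ?(gt_eqF qp) // mulr1 mul1r.
  rewrite E2; split.
    by rewrite ler_pM2l // ln_le_sub1 // invr_gt0.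
  move/(mulfI qxp) => e.
  have : (s * q x)^-1 == 1.
    apply/negPn/negP => ne; have := @ln_lt_sub1 ((s * q x)^-1).
    by rewrite e ltxx invr_gt0 => /(_ yp ne).
  move/eqP => /(congr1 GRing.inv); rewrite invrK invr1 => e1.
  have sn : s != 0 by rewrite gt_eqF.
  by rewrite (_ : true%:R = s * q x) // mulrC mulKf.
split.
  have : \sum_x t x <= \sum_x r x by apply: ler_sum => x _; case: (key x).
  rewrite Ht Hr; lra.
move=> He.
have : \sum_x (r x - t x) = 0 by rewrite sumrB Ht Hr He; lra.
move/eqP; rewrite psumr_eq0; last by move=> x _; case: (key x) => k _; lra.
move/allP => H x; have := H x (mem_index_enum x); rewrite subr_eq0 => /eqP e.
by case: (key x) => _; apply.
Qed.


Lemma entropy_unif (X : finType) (S : pred X) :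
  0 < \sum_x ((S x)%:R : R) ->
  - \sum_x ((S x)%:R / \sum_y ((S y)%:R : R)) * ln ((S x)%:R / \sum_y ((S y)%:R : R))
  = ln (\sum_x ((S x)%:R : R)).
Proof.
set s := \sum_y _ => s0.
rewrite (eq_bigr (fun x => - (((S x)%:R / s) * ln s))).
  by rewrite sumrN opprK -big_distrl /= -big_distrl /= mulfV ?mul1r // gt_eqF.
move=> x _; case: (S x); last by rewrite !mul0r oppr0.
by rewrite !mul1r lnV ?posrE // mulrN.
Qed.

End G.

Section Constr.
Variables (R : realType) (N : finType) (A : N -> finType) (T : nat).
Notation G := 'I_T.+1.
Definition Mx : N -> finType := fun j => (A j * G)%type.

Definition afst (m : profile N Mx) : profile N A := [ffun j => (m j).1].
Definition gsnd (m : profile N Mx) : profile N (fun _ => G) := [ffun j => (m j).2].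
Definition zipm (a : profile N A) (g : profile N (fun _ => G)) : profile N Mx :=
  [ffun j => (a j, g j)].

Lemma afst_zip a g : afst (zipm a g) = a.
Proof. by apply/ffunP => j; rewrite !ffunE. Qed.
Lemma gsnd_zip a g : gsnd (zipm a g) = g.
Proof. by apply/ffunP => j; rewrite !ffunE. Qed.
Lemma zip_fs m : zipm (afst m) (gsnd m) = m.
Proof. by apply/ffunP => j; rewrite !ffunE /=; case: (m j). Qed.

Lemma sum_split (F : profile N Mx -> R) :
  \sum_m F m = \sum_a \sum_g F (zipm a g).
Proof.
rewrite pair_big /=.
rewrite (reindex (fun ag : profile N A * profile N (fun _ => G) => zipm ag.1 ag.2)) //.
exists (fun m => (afst m, gsnd m)) => [[a g] _ | m _] /=.
  by rewrite afst_zip gsnd_zip.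
exact: zip_fs.
Qed.


Lemma prod_ind (x y : profile N A) :
  \prod_j (((x j == y j))%:R : R) = (x == y)%:R.
Proof.
have [->|nxy] := eqVneq x y.
  by rewrite big1 // => j _; rewrite eqxx.
have [j nj] : exists j, x j != y j.
  apply/existsP; rewrite -negb_forall; apply: contra nxy => /forallP H.
  by apply/eqP/ffunP => j; apply/eqP.
by rewrite (bigD1 j) //= (negbTE nj) mul0r.
Qed.

Lemma mixpay_pure (u : N -> profile N A -> R) i (s : forall j, A j -> R) (c : profile N A) :
  (forall j y, s j y = (y == c j)%:R) -> mixpay u i s = u i c.
Proof.
move=> hs; rewrite /mixpay.
under eq_bigr => a _ do under eq_bigr => j _ do rewrite hs.
under eq_bigr => a _ do rewrite prod_ind.
rewrite (bigD1 c) //= eqxx mul1r big1 ?addr0 // => a /negbTE ->.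
by rewrite mul0r.
Qed.

Lemma sum_pure (X : finType) (x : X) : \sum_y (pure R x y) = 1.
Proof.
rewrite (bigD1 x) //= /pure eqxx big1 ?addr0 // => y /negbTE ->. by [].
Qed.

Definition sig (j : N) (mj : Mx j) : A j -> R := pure R mj.1.

Lemma sig_strategy : is_strategy sig.
Proof.
move=> j mj; split; last exact: sum_pure.
by move=> y; rewrite /sig /pure ler0n.
Qed.

Lemma mixpay_sig u i m : mixpay u i (mixed_at sig m) = u i (afst m).
Proof. by apply: mixpay_pure => j y; rewrite /mixed_at /sig /pure ffunE. Qed.

Lemma mixpay_dev u i m (b : A i) :
  mixpay u i (dfwith (mixed_at sig m) (pure R b)) = u i (upd (afst m) i b).
Proof.
apply: mixpay_pure => j; rewrite /upd ffunE.
case: (eqVneq i j) => [<-|nij] y; first by rewrite !dfwith_in.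
by rewrite !dfwith_out // /mixed_at /sig /pure ffunE.
Qed.


Definition shiftg (j0 : N) (c : G) (g : profile N (fun _ => G)) : profile N (fun _ => G) :=
  [ffun j => if j == j0 then g j + c else g j].

Lemma shiftgK j0 c : cancel (shiftg j0 c) (shiftg j0 (- c)).
Proof.
move=> g; apply/ffunP => j; rewrite !ffunE.
by case: (j == j0) => //; rewrite addrK.
Qed.

Lemma shift_count i k (j0 : N) (ne : i != j0) (c : G) :
  \sum_(g : profile N (fun _ => G)) ((g i == k)%:R * ((\sum_j g j == c))%:R : R)
  = \sum_(g : profile N (fun _ => G)) (g i == k)%:R * ((\sum_j g j == 0))%:R.
Proof.
rewrite (reindex_inj (can_inj (shiftgK j0 c))) /=.
apply: eq_bigr => g _; congr (_ * _%:R).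
  by rewrite ffunE (negbTE ne).
rewrite (bigD1 j0) //= ffunE eqxx.
rewrite (eq_bigr (fun j => g j)); last by move=> j /negbTE nj; rewrite ffunE nj.
rewrite [\sum_j g j](bigD1 j0) //= -addrA [c + _]addrC addrA.
by rewrite -[X in _ == X]add0r (inj_eq (addIr c)).
Qed.

Lemma sum_lt_nat m n : (\sum_(c < m) (c < n) = minn m n)%N.
Proof.
elim: m => [|m IH]; first by rewrite big_ord0 min0n.
rewrite big_ord_recr /= IH.
case: (ltnP m n) => h.
  by rewrite !minnE /= ; lia.
by rewrite addn0 !minnE; lia.
Qed.

Lemma count_lt (n : nat) : (n <= T.+1)%N -> \sum_(c : G) (((val c < n)%N)%:R : R) = n%:R.
Proof.
move=> hn; rewrite -natr_sum sum_lt_nat; congr (_%:R).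
by apply/minn_idPr.
Qed.


Lemma sum_delta (X : finType) (x0 : X) (f : X -> R) :
  \sum_x ((x0 == x)%:R * f x) = f x0.
Proof.
rewrite (bigD1 x0) //= eqxx mul1r [X in _ + X]big1 ?addr0 // => x nx.
by rewrite eq_sym (negbTE nx) mul0r.
Qed.

Lemma zip_app a g j : zipm a g j = (a j, g j).
Proof. by rewrite ffunE. Qed.

Lemma ce_slice (u : N -> profile N A -> R) (p : profile N A -> R) :
  correlated_eq u p -> forall i (x : A i) b,
  0 <= \sum_(a : profile N A | a i == x) p a * (u i a - u i (upd a i b)).
Proof.
move=> [[p0 p1] ce] i x b.
have [pos|] := ltP 0 (\sum_(a : profile N A | a i == x) p a); first exact: ce.
move=> le0.
have : \sum_(a : profile N A | a i == x) p a = 0.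
  by apply/eqP; rewrite eq_le le0 sumr_ge0.
move/psumr_eq0P => H.
by rewrite big1 // => a ax; rewrite H // mul0r.
Qed.

Variables (u : N -> profile N A -> R) (p : profile N A -> R).
Hypothesis ceq : correlated_eq u p.
Variables (n : profile N A -> nat) (lam : R).
Hypothesis lam0 : 0 < lam.
Hypothesis hn : forall a, (n a)%:R = lam * p a.
Hypothesis hT : forall a, (n a <= T.+1)%N.

Definition inS (m : profile N Mx) : bool := (val (\sum_j gsnd m j)%R < n (afst m))%N.

Lemma obed i (x : A i) (k : G) b :
  0 <= \sum_(m : profile N Mx) ((m i == (x,k))%:R * (inS m)%:R) * (u i (afst m) - u i (upd (afst m) i b)).
Proof.
pose diff a := u i a - u i (upd a i b).
pose Cnt a := \sum_(g : profile N (fun _ => G)) ((g i == k)%:R * ((val (\sum_j g j)%R < n a)%N)%:R : R).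
rewrite sum_split.
have E : forall a, \sum_g ((zipm a g i == (x,k))%:R * (inS (zipm a g))%:R) *
   (u i (afst (zipm a g)) - u i (upd (afst (zipm a g)) i b)) = (a i == x)%:R * diff a * Cnt a.
  move=> a; rewrite /Cnt big_distrr; apply: eq_bigr => g _.
  rewrite /inS afst_zip gsnd_zip zip_app xpair_eqE /diff.
  by case: (a i == x); case: (g i == k) => /=; ring.
under eq_bigr => a _ do rewrite E.
have Cnt0 a : 0 <= Cnt a by apply: sumr_ge0 => g _; rewrite mulr_ge0 ?ler0n.
case: (pickP (fun j => j != i)) => [j0 ne|allI].
  have ne' : i != j0 by rewrite eq_sym.
  pose Z := \sum_(g : profile N (fun _ => G)) ((g i == k)%:R * ((\sum_j g j == 0))%:R : R).
  have CntE a : Cnt a = (n a)%:R * Z.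
    have e1 (g : profile N (fun _ => G)) : (((val (\sum_j g j)%R < n a)%N)%:R : R) =
       \sum_(c : G) ((\sum_j g j == c)%R)%:R * ((val c < n a)%N)%:R.
      by rewrite (@sum_delta G (\sum_j g j) (fun c : G => ((val c < n a)%N)%:R)).
    rewrite /Cnt; under eq_bigr => g _ do rewrite e1 big_distrr /=.
    rewrite exchange_big /= -(@count_lt _ (hT a)) big_distrl /=.
    apply: eq_bigr => c _.
    rewrite mulrC /Z -(@shift_count i k j0 (ne') c) big_distrl /=.
    by apply: eq_bigr => g _; ring.
  have Z0 : 0 <= Z by apply: sumr_ge0 => g _; rewrite mulr_ge0 ?ler0n.
  under eq_bigr => a _ do rewrite CntE hn.
  have := @ce_slice u p ceq i x b; rewrite big_mkcond /= => H.
  rewrite (eq_bigr (fun a : profile N A => (Z * lam) * (if a i == x then p a * diff a else 0))).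
    by rewrite -big_distrr /=; apply: mulr_ge0 => //; apply: mulr_ge0 => //; apply: ltW.
  by move=> a _; case: (a i == x); rewrite /diff /=; ring.
apply: sumr_ge0 => a _.
case ax: (a i == x); last by rewrite !mul0r.
rewrite mul1r.
have [n0|npos] := eqVneq (n a) 0%N.
  rewrite (_ : Cnt a = 0) ?mulr0 // /Cnt big1 // => g _.
  by rewrite n0 ltn0 mulr0.
apply: mulr_ge0 => //.
have pp : 0 < p a.
  have : 0 < (n a)%:R :> R by rewrite ltr0n lt0n.
  rewrite hn => h; rewrite -(pmulr_rgt0 _ lam0) //.
have := @ce_slice u p ceq i x b.
rewrite (bigD1 a) //= big1 ?addr0.
  by rewrite pmulr_rge0.
move=> a' /andP [a'x na']; exfalso; move/negP: na'; apply.
apply/eqP/ffunP => j.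
have e : i = j by have := allI j => /= /negbFE /eqP ->.
case: j / e.
by rewrite (eqP a'x) (eqP ax).
Qed.


Hypothesis hpos : forall a, 0 < p a -> (0 < n a)%N.

Definition g0 : profile N (fun _ => G) := [ffun _ => 0].

Lemma inS_zero m : [forall j, gsnd m j == 0] -> 0 < p (afst m) -> inS m.
Proof.
move=> /forallP H /hpos; rewrite /inS big1 //= => j _; exact/eqP.
Qed.

Definition sS : R := \sum_(m : profile N Mx) (inS m)%:R.
Definition q0 (m : profile N Mx) : R := (inS m)%:R / sS.
Definition etaM (mu : profile N A -> R) (m : profile N Mx) : R :=
  ([forall j, gsnd m j == 0])%:R * mu (afst m).
Definition Fs (f : profile N Mx -> R) : Prop := f = (fun m => (~~ inS m)%:R).

Lemma sS_pos : 0 < sS.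
Proof.
case: ceq => [[p0 p1] _].
have [a pa] : exists a, p a != 0.
  apply/existsP; rewrite -negb_forall; apply/negP => /forallP H.
  move: p1; rewrite big1 => [/eqP|a _]; first by rewrite eq_sym oner_eq0.
  exact/eqP.
have pa' : 0 < p a by rewrite lt_def pa p0.
have Hm : inS (zipm a g0).
  apply: inS_zero; last by rewrite afst_zip.
  by apply/forallP => j; rewrite gsnd_zip ffunE.
rewrite /sS (bigD1 (zipm a g0)) //= Hm.
apply: (lt_le_trans (y := 1)) => //; rewrite lerDl; apply: sumr_ge0 => m _.
exact: ler0n.
Qed.

Lemma gsum : \sum_(g : profile N (fun _ => G)) ([forall j, g j == 0] %:R : R) = 1.
Proof.
rewrite (eq_bigr (fun g => (g0 == g)%:R * 1)).
  by rewrite (@sum_delta _ g0 (fun _ => 1)).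
move=> g _; rewrite mulr1.
have -> : [forall j, g j == 0] = (g0 == g); last by [].
apply/forallP/eqP => [H|<- j]; last by rewrite ffunE.
by apply/ffunP => j; rewrite ffunE; apply/esym/eqP.
Qed.

Lemma implemented_mu (mu : profile N A -> R) :
  is_dist mu -> (forall a, 0 < mu a -> 0 < p a) ->
  is_dist (etaM mu) /\ implemented u (etaM mu) Fs mu.
Proof.
move=> [mu0 mu1] hmu.
have eta0 m : 0 <= etaM mu m by rewrite /etaM mulr_ge0 ?ler0n.
have eta1 : \sum_m etaM mu m = 1.
  rewrite sum_split -mu1; apply: eq_bigr => a _.
  under eq_bigr => g _ do rewrite /etaM afst_zip gsnd_zip mulrC.
  by rewrite -big_distrr /= gsum mulr1.
have etaS : \sum_m etaM mu m * (~~ inS m)%:R = 0.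
  rewrite big1 // => m _; rewrite /etaM.
  case H: [forall j, gsnd m j == 0]; last by rewrite !mul0r.
  have [z|nz] := eqVneq (mu (afst m)) 0; first by rewrite z mulr0 mul0r.
  by rewrite inS_zero // ?mulr0 // hmu // lt_def nz mu0.
split; first by split.
exists sig; split; first exact: sig_strategy.
exists q0; split; [|split].
-
  have s0 := sS_pos.
  have DD : DeltaD (etaM mu) Fs q0.
    split.
      split; first by move=> m; rewrite /q0 divr_ge0 ?ler0n // ltW.
      by rewrite /q0 -big_distrl /= mulfV // gt_eqF.
    move=> f ->; rewrite etaS big1 // => m _.
    by rewrite /q0; case: (inS m); rewrite /= ?mulr0 ?mul0r.
  have supp q' : DeltaD (etaM mu) Fs q' -> forall m, ~~ inS m -> q' m = 0.
    move=> [[q'0 q'1] H] m nm.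
    have := H _ (erefl _); rewrite etaS => /eqP; rewrite psumr_eq0; last first.
      by move=> x _; rewrite mulr_ge0 ?ler0n.
    move/allP/(_ m (mem_index_enum _)); rewrite nm mulr1; exact/eqP.
  have Hent : entropy q0 = ln sS by rewrite /entropy /q0 entropy_unif.
  split; first exact: DD.
  split.
    move=> q' D'; have [q'0 q'1] := D'.1.
    rewrite Hent; exact: (@gibbs R _ inS q' s0 q'0 q'1 (supp q' D')).1.
  move=> q' D' He; have [q'0 q'1] := D'.1.
  have := (@gibbs R _ inS q' s0 q'0 q'1 (supp q' D')).2; rewrite -Hent => /(_ He) Hq.
  by apply: FunctionalExtensionality.functional_extensionality => m; rewrite Hq.
- move=> i [x k] _ b.
  under eq_bigr => m _ do rewrite mixpay_sig mixpay_dev.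
  have := @obed i x k b; rewrite big_mkcond /=.
  move=> H.
  rewrite big_mkcond /= (eq_bigr (fun m : profile N Mx => sS^-1 * ((m i == (x,k))%:R * (inS m)%:R *
             (u i (afst m) - u i (upd (afst m) i b))))).
    by rewrite -big_distrr /= mulr_ge0 // invr_ge0 ltW // sS_pos.
  move=> m _; rewrite /q0; case: (m i == (x,k)) => /=; last by rewrite !mul0r mulr0.
  by rewrite mul1r mulrAC mulrC.
- move=> a.
  rewrite sum_split.
  rewrite (eq_bigr (fun a' => (a' == a)%:R * mu a')).
    rewrite (bigD1 a) //= eqxx mul1r [X in _ + X]big1 ?addr0 // => a' na.
    by rewrite (negbTE na) mul0r.
  move=> a' _.
  rewrite (eq_bigr (fun g : profile N (fun _ => G) => ((a' == a)%:R * mu a') * ([forall j, g j == 0])%:R)).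
    by rewrite -big_distrr /= gsum mulr1.
  move=> g _; rewrite /etaM afst_zip gsnd_zip.
  have -> : \prod_j sig j (zipm a' g j) (a j) = (a' == a)%:R.
    rewrite eq_sym -prod_ind; apply: eq_bigr => j _.
    by rewrite zip_app /sig /pure.
  by ring.
Qed.

End Constr.

Theorem lemma1 (R : realType) (N : finType) (A : N -> finType)
  (u : N -> profile N A -> R) (p : profile N A -> R) :
  correlated_eq u p ->
  (forall a : profile N A, exists r : rat, p a = ratr r) ->
  exists M : N -> finType,
    forall mu : profile N A -> R,
      is_dist mu ->
      (forall a : profile N A, 0 < mu a -> 0 < p a) ->
      exists (eta : profile N M -> R) (F : (profile N M -> R) -> Prop),
        is_dist eta /\ implemented u eta F mu.
Proof.
move=> ceq hrat.
have [r hr] := fin_all_exists hrat.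
pose den a := `|denq (r a)|%N.
pose n a := (`|numq (r a)| * \prod_(b | b != a) den b)%N.
pose Dn := (\prod_a den a)%N.
have den0 a : 0 < (den a)%:R :> R by rewrite ltr0n absz_gt0 denq_neq0.
have Dn0 : 0 < Dn%:R :> R by rewrite natr_prod prodr_gt0 // => b _.
have hn a : (n a)%:R = Dn%:R * p a.
  have p0 : 0 <= p a by case: ceq => [[p0 _] _].
  have r0 : 0 <= numq (r a) by rewrite numq_ge0 -(ler0q R) -hr.
  have -> : Dn = (den a * \prod_(b | b != a) den b)%N by rewrite /Dn (bigD1 a).
  rewrite /n !natrM hr /ratr.
  rewrite /den !natr_absz (ger0_norm r0) (gtr0_norm (denq_gt0 _)).
  set P := ((\prod_(b | b != a) _)%N)%:R.
  have dn : (denq (r a))%:~R != 0 :> R by rewrite intr_eq0 denq_neq0.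
  by field.
pose T := (\sum_a n a)%N.
have hT a : (n a <= T.+1)%N.
  by apply: leq_trans (leqnSn _); rewrite /T (bigD1 a) //= leq_addr.
have hpos a : 0 < p a -> (0 < n a)%N.
  by move=> pa; rewrite -(ltr0n R) hn mulr_gt0.
exists (Mx N A T) => mu hmu hsupp.
exists (etaM R N A T mu), (Fs R N A T n).
exact: (@implemented_mu R N A T u p ceq n _ Dn0 hn hT hpos mu hmu hsupp).
Qed.
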